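(* Let $n\ge2$ and let $X,Y$ be identically distributed random variables taking values in $\{x_1,\dots,x_n\}$ with $x_1<\dots<x_n$, each value with positive probability. Let $P=(p_{ij})_{n\times n}$ with $p_{ij}=\mathbb P(X=x_i,Y=x_j)$, $\mathbf p=P\mathbf 1_n=(p_1,\dots,p_n)^\top$ and $D=\mathrm{diag}(\mathbf p)$. Then for $r\in[-1,1]$, $(X,Y)\in\mathrm{IC}_r$ if and only if $$\frac{P+P^\top}{2}=rD+(1-r)\mathbf p\mathbf p^\top.$$ Furthermore, in this case $\underline r_{\mathbf p}\le r\le1$, where $$\underline r_{\mathbf p}=\max\Big(\max_{j\in[n]}\Big(-\frac{p_j}{1-p_j}\Big),\ \max_{i,j\in[n],\,i\ne j}\Big(1-\frac1{p_ip_j}\Big)\Big).$$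
   Context: $(X,Y)\in\mathrm{IC}_r$ means $\mathrm{Corr}(X,Y)=\mathrm{Corr}(g(X),g(Y))=r$ for every measurable $g:\mathbb R\to\mathbb R$ such that $g(X),g(Y)$ are non-degenerate with finite variance. (Equivalently the condition says $(X,Y)$ is quasi-$r$-Fréchet.) *)

(* Defs.v *)
From HB Require Import structures.
From mathcomp Require Import all_boot all_order all_algebra.
From mathcomp Require Import all_classical all_reals all_analysis.
Set Implicit Arguments. Unset Strict Implicit. Unset Printing Implicit Defensive.
Import Order.TTheory GRing.Theory Num.Theory.
Local Open Scope classical_set_scope.
Local Open Scope ring_scope.

Section Defs.
Context {R : realType} {d : measure_display} {T : measurableType d}
  (P : probability T R).

Definition corr (U V : T -> R) : R :=
  fine (covariance P U V) / Num.sqrt (fine ('V_P[U]) * fine ('V_P[V])).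

Definition finite_variance (U : T -> R) : Prop := U \in Lfun P 2%:E.

Definition nondegenerate (U : T -> R) : Prop := (0 < 'V_P[U])%E.

Definition IC (X Y : T -> R) (r : R) : Prop :=
  corr X Y = r /\
  forall g : R -> R, measurable_fun setT g ->
    finite_variance (g \o X) -> finite_variance (g \o Y) ->
    nondegenerate (g \o X) -> nondegenerate (g \o Y) ->
    corr (g \o X) (g \o Y) = r.

Definition jointM (n : nat) (x : 'I_n -> R) (X Y : T -> R) : 'M[R]_n :=
  \matrix_(i, j) fine (P (X @^-1` [set x i] `&` Y @^-1` [set x j])).

Definition margvec (n : nat) (x : 'I_n -> R) (X Y : T -> R) : 'cV[R]_n :=
  jointM x X Y *m const_mx 1.
End Defs.

Definition seqmax {R : realType} (s : seq R) : R := foldr Num.max (head 0 s) s.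

Definition rlow {R : realType} (n : nat) (p : 'I_n -> R) : R :=
  Num.max
    (seqmax [seq - (p j / (1 - p j)) | j <- enum 'I_n])
    (seqmax [seq 1 - (p ij.1 * p ij.2)^-1 |
              ij <- [seq (i, j) | i <- enum 'I_n, j <- enum 'I_n] & ij.1 != ij.2]).

(* Main.v *)
Require Import Defs.
From HB Require Import structures.
From mathcomp Require Import all_boot all_order all_algebra.
From mathcomp Require Import all_classical all_reals all_analysis.
From mathcomp Require Import ring lra.
Import Order.TTheory GRing.Theory Num.Theory.
Local Open Scope classical_set_scope.
Local Open Scope ring_scope.

Module Helpers.
Set Implicit Arguments. Unset Strict Implicit.

Section Alg.
Context (R : realType) (n : nat).

Definition DS (f : 'I_n -> 'I_n -> R) := \sum_(i < n) \sum_(j < n) f i j.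

Lemma eq_DS f g : (forall i j, f i j = g i j) -> DS f = DS g.
Proof. by move=> fg; apply: eq_bigr => i _; apply: eq_bigr => j _. Qed.

Lemma DS_add f g : DS (fun i j => f i j + g i j) = DS f + DS g.
Proof. by rewrite /DS -big_split; apply: eq_bigr => i _; rewrite big_split. Qed.

Lemma DS_sub f g : DS (fun i j => f i j - g i j) = DS f - DS g.
Proof. by rewrite /DS -sumrB; apply: eq_bigr => i _; rewrite sumrB. Qed.

Lemma DS_scale c f : DS (fun i j => c * f i j) = c * DS f.
Proof. by rewrite /DS mulr_sumr; apply: eq_bigr => i _; rewrite mulr_sumr. Qed.

Lemma DS_swap f : DS f = DS (fun i j => f j i).
Proof. by rewrite /DS exchange_big. Qed.

Lemma DS_prod u v : DS (fun i j => u i * v j) = (\sum_i u i) * (\sum_j v j).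
Proof. by rewrite /DS mulr_suml; apply: eq_bigr => i _; rewrite mulr_sumr. Qed.

Lemma sum_delta (f : 'I_n -> R) k : \sum_(j < n) f j * (k == j)%:R = f k.
Proof.
rewrite (bigD1 k)//= eqxx mulr1 big1 ?addr0// => j /negbTE.
by rewrite eq_sym => ->; rewrite mulr0.
Qed.

Lemma sum_delta' (f : 'I_n -> R) k : \sum_(j < n) f j * (j == k)%:R = f k.
Proof. by rewrite -(sum_delta f k); apply: eq_bigr => j _; rewrite eq_sym. Qed.

Lemma DS_diag (f : 'I_n -> 'I_n -> R) : DS (fun i j => f i j * (i == j)%:R) = \sum_i f i i.
Proof. by rewrite /DS; apply: eq_bigr => i _; rewrite (sum_delta (f i)). Qed.

Lemma DS_delta2 (f : 'I_n -> 'I_n -> R) k l :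
  DS (fun i j => f i j * ((i == k)%:R * (j == l)%:R)) = f k l.
Proof.
rewrite /DS (bigD1 k)//= [X in _ + X]big1 ?addr0.
  rewrite -(sum_delta' (f k) l); apply: eq_bigr => j _; rewrite eqxx mul1r//.
move=> i /negbTE ->; apply: big1 => j _; by rewrite mul0r mulr0.
Qed.

Lemma DS_rowsel (f : 'I_n -> 'I_n -> R) k :
  DS (fun i j => (i == k)%:R * f i j) = \sum_j f k j.
Proof.
rewrite /DS (bigD1 k)//= [X in _ + X]big1 ?addr0.
  by apply: eq_bigr => j _; rewrite eqxx mul1r.
by move=> i /negbTE ->; apply: big1 => j _; rewrite mul0r.
Qed.

Lemma DS_colsel (f : 'I_n -> 'I_n -> R) k :
  DS (fun i j => (j == k)%:R * f i j) = \sum_i f i k.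
Proof.
rewrite DS_swap /= (DS_rowsel (fun i j => f j i)); done.
Qed.

Variable p : 'I_n -> 'I_n -> R.
Let pm i := \sum_(j < n) p i j.
Hypothesis hcol : forall j, \sum_(i < n) p i j = pm j.
Hypothesis htot : DS p = 1.

Lemma DS_row (u : 'I_n -> R) : DS (fun i j => u i * p i j) = \sum_i u i * pm i.
Proof. by rewrite /DS; apply: eq_bigr => i _; rewrite mulr_sumr. Qed.

Lemma DS_col (u : 'I_n -> R) : DS (fun i j => u j * p i j) = \sum_i u i * pm i.
Proof.
rewrite DS_swap; apply: eq_bigr => i _; rewrite -hcol mulr_sumr.
by apply: eq_bigr.
Qed.

Definition Mq (r : R) i j :=
  2^-1 * (p i j + p j i) - r * (pm i *+ (i == j)) - (1 - r) * (pm i * pm j).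

Lemma key (a : 'I_n -> R) (r : R) :
  let m := \sum_i a i * pm i in
  DS (fun i j => (a i - m) * (a j - m) * p i j)
   - r * (\sum_i (a i - m) ^+ 2 * pm i)
  = DS (fun i j => a i * a j * Mq r i j).
Proof.
move=> m.
have e1 : DS (fun i j => (a i - m) * (a j - m) * p i j) =
   DS (fun i j => a i * a j * p i j) - m * DS (fun i j => a i * p i j)
   - m * DS (fun i j => a j * p i j) + (m * m) * DS p.
  rewrite -!DS_scale -DS_sub -DS_sub -DS_add; apply: eq_DS => i j /=; ring.
have e2 : \sum_i (a i - m) ^+ 2 * pm i =
    DS (fun i j => a i * a i * p i j) - (2 * m) * DS (fun i j => a i * p i j)
    + (m * m) * DS p.
  rewrite -DS_row -!DS_scale -DS_sub -DS_add; apply: eq_DS => i j /=; ring.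
have e3 : DS (fun i j => a i * a j * Mq r i j) =
    2^-1 * DS (fun i j => a i * a j * p i j) + 2^-1 * DS (fun i j => a i * a j * p j i)
    - r * DS (fun i j => a i * a j * pm i * (i == j)%:R)
    - (1 - r) * DS (fun i j => (a i * pm i) * (a j * pm j)).
  rewrite -!DS_scale -DS_add -!DS_sub; apply: eq_DS => i j /=.
  rewrite /Mq -mulr_natr; ring.
have sw : DS (fun i j => a i * a j * p j i) = DS (fun i j => a i * a j * p i j).
  by rewrite DS_swap; apply: eq_DS => i j /=; ring.
rewrite e1 e2 e3 sw DS_diag DS_prod htot (DS_row (fun i => a i * a i)) DS_row DS_col -/m.
by field.
Qed.


Lemma Mq_sym r i j : Mq r i j = Mq r j i.
Proof.
rewrite /Mq; have [->//|ne] := eqVneq i j.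
by rewrite !mulr0n; ring.
Qed.

End Alg.

Section Alg2.
Context (R : realType) (n : nat).

Lemma other (hn : (1 < n)%N) (k : 'I_n) : exists l : 'I_n, l != k.
Proof.
case: (eqVneq (val k) 0%N) => hk.
  by exists (Ordinal hn); apply/eqP => e; move: hk; rewrite -e.
by exists (Ordinal (ltnW hn)); apply/eqP => e; move: hk; rewrite -e.
Qed.

Lemma Mzero (M : 'I_n -> 'I_n -> R) (Msym : forall i j, M i j = M j i)
  (hn : (1 < n)%N)
  (H : forall a : 'I_n -> R, (exists k l, a k != a l) ->
        DS (fun i j => a i * a j * M i j) = 0) :
  forall k l, M k l = 0.
Proof.
have Hd k : M k k = 0.
  have [l hl] := other hn k.
  have := H (fun i => (i == k)%:R); rewrite -(DS_delta2 M k k).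
  have -> : DS (fun i j => (i == k)%:R * (j == k)%:R * M i j) =
            DS (fun i j => M i j * ((i == k)%:R * (j == k)%:R)).
    by apply: eq_DS => i j; rewrite mulrC.
  apply; exists k, l; rewrite eqxx (negbTE hl) /=; exact: oner_neq0.
move=> k l; have [->//|ne] := eqVneq k l.
have := H (fun i => (i == k)%:R - (i == l)%:R).
have -> : DS (fun i j => ((i == k)%:R - (i == l)%:R) * ((j == k)%:R - (j == l)%:R) * M i j)
   = DS (fun i j => M i j * ((i == k)%:R * (j == k)%:R))
     - DS (fun i j => M i j * ((i == k)%:R * (j == l)%:R))
     - DS (fun i j => M i j * ((i == l)%:R * (j == k)%:R))
     + DS (fun i j => M i j * ((i == l)%:R * (j == l)%:R)).
  by rewrite -!DS_sub -DS_add; apply: eq_DS => i j /=; ring.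
rewrite !DS_delta2 !Hd (Msym l k) => HH.
have h : 0 - M k l - M k l + 0 = 0.
  apply: HH; exists k, l; rewrite !eqxx.
  by move: ne; case: (k == l) => // _; case: (l == k) => /=; apply/negP => /eqP e; lra.
lra.
Qed.

Lemma Wpos (q : 'I_n -> R) (hq : forall i, 0 < q i) (b : 'I_n -> R) (c : R) k l :
  b k != b l -> 0 < \sum_i (b i - c) ^+ 2 * q i.
Proof.
move=> bkl; have ge : forall i, true -> 0 <= (b i - c) ^+ 2 * q i.
  by move=> i _; rewrite mulr_ge0 ?sqr_ge0 ?ltW.
rewrite lt_def sumr_ge0 // andbT; apply/negP => /eqP h0.
have z i : b i = c.
  have := psumr_eq0P ge h0 (erefl true) (i := i).
  move/eqP; rewrite mulf_eq0 (gt_eqF (hq i)) orbF sqrf_eq0 subr_eq0.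
  by move/eqP.
by move: bkl; rewrite !z eqxx.
Qed.

Lemma foldmax_le (s : seq R) z0 r : z0 <= r -> (forall y, y \in s -> y <= r) ->
  foldr Num.max z0 s <= r.
Proof.
move=> h0; elim: s => [|z s IH] H //=.
rewrite ge_max; apply/andP; split; first by apply: H; rewrite mem_head.
by apply: IH => w ws; apply: H; rewrite inE ws orbT.
Qed.

Lemma seqmax_le (s : seq R) r : s != [::] -> (forall y, y \in s -> y <= r) ->
  seqmax s <= r.
Proof.
case: s => [//|y s] _ H; rewrite /seqmax; apply: foldmax_le => //=.
by apply: H; rewrite mem_head.
Qed.

End Alg2.

Section Aux.
Context (R : realType) (d : measure_display) (T : measurableType d)
  (P : probability T R).

Lemma indic_Lfun (A : set T) (r : R) : measurable A -> (0 < r)%R ->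
  (\1_A : T -> R) \in Lfun P r%:E.
Proof.
move=> mA r0; rewrite inE/=; apply/andP; split; rewrite inE/=.
  exact: measurable_realfun.measurable_indic.
rewrite /finite_norm unlock poweR_lty//.
have -> : (\int[P]_x `|(EFin \o \1_A) x| `^ r = \int[P]_x (\1_A x)%:E)%E.
  apply: eq_integral => t _ /=; rewrite indicE; case: (t \in A).
    by rewrite /= normr1 powR1.
  by rewrite /= normr0 powR0// gt_eqF.
by rewrite integral_indic// setIT (le_lt_trans (probability_le1 _ _)) ?ltry.
Qed.

Lemma expectation_sum_fun (I : Type) (s : seq I) (F : I -> T -> R) :
  (forall i, F i \in Lfun P 1) ->
  ('E_P[\sum_(i <- s) F i] = \sum_(i <- s) 'E_P[F i])%E.
Proof.
move=> FL; elim: s => [|i s IH]; first by rewrite !big_nil expectation_cst.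
rewrite !big_cons -IH; apply: expectationD => //.
by apply: rpred_sum => j _.
Qed.


Context (n : nat) (x : 'I_n -> R) (X Y : {RV P >-> R})
  (xinj : injective x)
  (hXv : forall t, exists i, X t = x i) (hYv : forall t, exists i, Y t = x i).

Definition EE i j := X @^-1` [set x i] `&` Y @^-1` [set x j].
Definition pij i j := fine (P (EE i j)).

Lemma mEE i j : measurable (EE i j).
Proof.
apply: measurableI; apply: measurable_funPTI; exact: measurable_set1.
Qed.

Lemma rep (h : R -> R -> R) t :
  h (X t) (Y t) = \sum_(i < n) \sum_(j < n) h (x i) (x j) * \1_(EE i j) t.
Proof.
have [i0 Hi] := hXv t; have [j0 Hj] := hYv t.
rewrite (bigD1 i0)//= [X in _ + X]big1 ?addr0; last first.
  move=> i ni; apply: big1 => j _; rewrite indicE memNset ?mulr0// => -[/= Hx _].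
  by move: ni; rewrite -(xinj (etrans (esym Hi) Hx)) eqxx.
rewrite (bigD1 j0)//= [X in _ + X]big1 ?addr0; last first.
  move=> j nj; rewrite indicE memNset ?mulr0// => -[/= _ Hy].
  by move: nj; rewrite -(xinj (etrans (esym Hj) Hy)) eqxx.
by rewrite indicE mem_set ?mulr1 -?Hi -?Hj//.
Qed.

Lemma Efun_Lfun (F : T -> R) (h : R -> R -> R) (r : R) : (1 <= r) ->
  (forall t, F t = h (X t) (Y t)) -> F \in Lfun P r%:E.
Proof.
move=> r1 HF.
have -> : F = \sum_(ij : 'I_n * 'I_n) (h (x ij.1) (x ij.2) \o* (\1_(EE ij.1 ij.2) : T -> R)).
  apply/funext => t; rewrite HF rep fct_sumE pair_big; apply: eq_bigr => ij _.
  by rewrite /= mulrC.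
apply: rpred_sum => ij _.
apply: Lfun_scale => //; apply: indic_Lfun; first exact: mEE.
by apply: lt_le_trans r1.
Qed.

Lemma Efun (F : T -> R) (h : R -> R -> R) :
  (forall t, F t = h (X t) (Y t)) ->
  ('E_P[F] = (DS (fun i j => h (x i) (x j) * pij i j))%:E)%E.
Proof.
move=> HF.
have -> : F = \sum_(ij : 'I_n * 'I_n) (h (x ij.1) (x ij.2) \o* (\1_(EE ij.1 ij.2) : T -> R)).
  apply/funext => t; rewrite HF rep fct_sumE pair_big; apply: eq_bigr => ij _.
  by rewrite /= mulrC.
have L1 i j : (\1_(EE i j) : T -> R) \in Lfun P 1.
  by apply: indic_Lfun => //; exact: mEE.
rewrite expectation_sum_fun; last by move=> ij; exact: Lfun_scale.
rewrite /DS pair_big -sumEFin; apply: eq_bigr => ij _.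
rewrite expectationZl// expectation_indic; last exact: mEE.
by rewrite /pij EFinM fineK ?fin_num_measure//; exact: mEE.
Qed.


Lemma pij_ge0 i j : 0 <= pij i j.
Proof. by rewrite /pij fine_ge0// measure_ge0. Qed.

Lemma tot : DS pij = 1.
Proof.
have := @Efun (cst 1) (fun _ _ => 1) (fun _ => erefl).
rewrite expectation_cst => /esym/eqP; rewrite eqe => /eqP <-.
by apply: eq_DS => i j; rewrite mul1r.
Qed.

Lemma rowPX k : P (X @^-1` [set x k]) = (\sum_j pij k j)%:E.
Proof.
rewrite -expectation_indic; last exact: measurable_funPTI (measurable_set1 _).
rewrite (@Efun _ (fun u _ => (u == x k)%:R)); last first.
  move=> t; rewrite indicE; case: eqP => [e|ne].
    by rewrite mem_set.
  by rewrite memNset.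
by rewrite -(DS_rowsel pij k); congr (_%:E); apply: eq_DS => i j; rewrite (inj_eq xinj).
Qed.

Lemma colPX k : P (Y @^-1` [set x k]) = (\sum_i pij i k)%:E.
Proof.
rewrite -expectation_indic; last exact: measurable_funPTI (measurable_set1 _).
rewrite (@Efun _ (fun _ v => (v == x k)%:R)); last first.
  move=> t; rewrite indicE; case: eqP => [e|ne].
    by rewrite mem_set.
  by rewrite memNset.
by rewrite -(DS_colsel pij k); congr (_%:E); apply: eq_DS => i j; rewrite (inj_eq xinj).
Qed.


Hypothesis hid : forall A : set R, measurable A ->
  distribution P X A = distribution P Y A.

Lemma hcol k : \sum_i pij i k = \sum_j pij k j.
Proof.
have := hid (measurable_set1 (x k)); rewrite /distribution /pushforward /=.
by rewrite rowPX colPX => /eqP; rewrite eqe => /eqP.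
Qed.

Definition pm i := \sum_j pij i j.
Definition mg (g : R -> R) := \sum_i g (x i) * pm i.
Definition Wg (g : R -> R) := \sum_i (g (x i) - mg g) ^+ 2 * pm i.
Definition Cg (g : R -> R) := DS (fun i j => (g (x i) - mg g) * (g (x j) - mg g) * pij i j).

Lemma EgX g : ('E_P[g \o X] = (mg g)%:E)%E.
Proof. by rewrite (@Efun _ (fun u _ => g u))// DS_row. Qed.

Lemma EgY g : ('E_P[g \o Y] = (mg g)%:E)%E.
Proof. by rewrite (@Efun _ (fun _ v => g v))// DS_col//; exact: hcol. Qed.

Lemma covg g : covariance P (g \o X) (g \o Y) = (Cg g)%:E.
Proof.
rewrite unlock EgX EgY /=.
by rewrite (@Efun _ (fun u v => (g u - mg g) * (g v - mg g))).
Qed.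

Lemma varX g : 'V_P[g \o X] = (Wg g)%:E.
Proof.
rewrite /variance unlock EgX /=.
rewrite (@Efun _ (fun u v => (g u - mg g) * (g u - mg g)))// /Wg.
by rewrite (DS_row pij (fun i => (g (x i) - mg g) * (g (x i) - mg g))); under eq_bigr do rewrite -expr2.
Qed.

Lemma varY g : 'V_P[g \o Y] = (Wg g)%:E.
Proof.
rewrite /variance unlock EgY /=.
rewrite (@Efun _ (fun u v => (g v - mg g) * (g v - mg g)))// /Wg.
rewrite (DS_col (p := pij) _ (fun i => (g (x i) - mg g) * (g (x i) - mg g))); last exact: hcol.
by under eq_bigr do rewrite -expr2.
Qed.

Lemma Wg_ge0 g : 0 <= Wg g.
Proof.
by apply: sumr_ge0 => i _; rewrite mulr_ge0 ?sqr_ge0// sumr_ge0// => j _; exact: pij_ge0.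
Qed.

Lemma corrg g : corr P (g \o X) (g \o Y) = Cg g / Wg g.
Proof.
by rewrite /corr covg varX varY /= -expr2 sqrtr_sqr ger0_norm//; exact: Wg_ge0.
Qed.

Lemma fvX g : finite_variance P (g \o X).
Proof. by apply: (@Efun_Lfun _ (fun u _ => g u)) => //; rewrite ler1n. Qed.

Lemma fvY g : finite_variance P (g \o Y).
Proof. by apply: (@Efun_Lfun _ (fun _ v => g v)) => //; rewrite ler1n. Qed.

End Aux.

Lemma term_le_sum (R : realType) n (f : 'I_n -> R) i :
  (forall k, 0 <= f k) -> f i <= \sum_k f k.
Proof.
move=> f0; rewrite (bigD1 i)//= lerDl sumr_ge0// => k _; exact: f0.
Qed.

Lemma two_le_sum (R : realType) n (f : 'I_n -> R) i l :
  (forall k, 0 <= f k) -> l != i -> f i + f l <= \sum_k f k.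
move=> f0 li; rewrite (bigD1 i)//= lerD2l (bigD1 l)//= lerDl sumr_ge0//.


Qed.


End Helpers.
Import Helpers.

Theorem proposition6 (R : realType) (d : measure_display) (T : measurableType d)
  (P : probability T R) (n : nat) (hn : (2 <= n)%N)
  (x : 'I_n -> R) (hx : forall i j : 'I_n, (i < j)%N -> x i < x j)
  (X Y : {RV P >-> R})
  (hXv : forall t, exists i, X t = x i) (hYv : forall t, exists i, Y t = x i)
  (hid : forall A : set R, measurable A ->
           distribution P X A = distribution P Y A)
  (hpos : forall i, (0 < P (X @^-1` [set x i]))%E)
  (r : R) (hr : -1 <= r <= 1) :
  (IC P X Y r <->
     2^-1 *: (jointM P x X Y + (jointM P x X Y)^T)
     = r *: diag_mx (margvec P x X Y)^T
       + (1 - r) *: (margvec P x X Y *m (margvec P x X Y)^T))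
  /\ (IC P X Y r -> rlow (fun i => margvec P x X Y i 0) <= r <= 1).
Proof.
have xinj : injective x.
  move=> i j e; apply: val_inj; case: (ltngtP i j) => // h.
    by have := hx _ _ h; rewrite e ltxx.
  by have := hx _ _ h; rewrite e ltxx.
have Jp i j : jointM P x X Y i j = pij x X Y i j by rewrite mxE.
have pmE i : margvec P x X Y i 0 = pm x X Y i.
  by rewrite /margvec mxE; apply: eq_bigr => j _; rewrite Jp mxE mulr1.
have hc := hcol xinj hXv hYv hid.
have ht := tot xinj hXv hYv.
have pmpos i : 0 < pm x X Y i.
  by have := hpos i; rewrite (rowPX xinj hXv hYv) lte_fin.
have hkey g : Cg x X Y g - r * Wg x X Y g =
    DS (fun i j => g (x i) * g (x j) * Mq (pij x X Y) r i j).
  exact: (key hc ht (fun i => g (x i)) r).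
have fE i j : fine (P (X @^-1` [set x i] `&` Y @^-1` [set x j])) = pij x X Y i j.
  by [].
have sE i : \sum_j0 jointM P x X Y i j0 * const_mx 1 j0 0 = pm x X Y i.
  by apply: eq_bigr => j _; rewrite Jp mxE mulr1.
have sE' i : \sum_j0 jointM P x X Y i j0 * const_mx 1 j0 ord0 = pm x X Y i.
  by apply: eq_bigr => j _; rewrite Jp mxE mulr1.
have matE : (2^-1 *: (jointM P x X Y + (jointM P x X Y)^T)
     = r *: diag_mx (margvec P x X Y)^T
       + (1 - r) *: (margvec P x X Y *m (margvec P x X Y)^T)) <->
     (forall i j, Mq (pij x X Y) r i j = 0).
  split.
    move/matrixP => H i j; have := H i j.
    rewrite !mxE big_ord1 !mxE !fE !sE ?sE' /Mq /pm => e; lra.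
  move=> H; apply/matrixP => i j; have := H i j.
  rewrite !mxE big_ord1 !mxE !fE !sE ?sE' /Mq /pm => e; lra.
have o0 : 'I_n := Ordinal (ltnW hn).
have o1 : 'I_n := Ordinal hn.
have x01 : x (Ordinal (ltnW hn)) != x (Ordinal hn) by rewrite lt_eqF // hx.
have Wpos_g g k l : g (x k) != g (x l) -> 0 < Wg x X Y g.
  by move=> gkl; exact: (Wpos pmpos (b := fun i => g (x i)) _ gkl).
have fwd : IC P X Y r -> forall i j, Mq (pij x X Y) r i j = 0.
  move=> [_ Hg]; apply: Mzero; first exact: Mq_sym.
    exact: hn.
  move=> a [k [l akl]].
  pose g := fun y => \sum_(i < n) a i * \1_[set x i] y.
  have gx i : g (x i) = a i.
    rewrite /g -(sum_delta a i); apply: eq_bigr => j _; rewrite indicE.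
    congr (_ * _%:R); congr (nat_of_bool _).
    case: (eqVneq i j) => [->|ne]; first by apply: mem_set.
    by apply: memNset => /= /xinj e; move: ne; rewrite e eqxx.
  have mgm : measurable_fun setT g.
    apply: measurable_sum => i; apply: measurable_realfun.measurable_funM => //.
  have ndX : Defs.nondegenerate P (g \o X).
    by rewrite /Defs.nondegenerate (varX xinj hXv hYv) lte_fin (Wpos_g g k l)// !gx.
  have ndY : Defs.nondegenerate P (g \o Y).
    by rewrite /Defs.nondegenerate (varY xinj hXv hYv hid) lte_fin (Wpos_g g k l)// !gx.
  have := Hg g mgm (fvX xinj hXv hYv g) (fvY xinj hXv hYv g) ndX ndY.
  rewrite (corrg xinj hXv hYv hid) => e.
  have Wp : 0 < Wg x X Y g by apply: (Wpos_g g k l); rewrite !gx.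
  have : Cg x X Y g - r * Wg x X Y g = 0 by rewrite -e divfK ?gt_eqF// subrr.
  by rewrite hkey => <-; apply: eq_DS => i j; rewrite !gx.
have bwd : (forall i j, Mq (pij x X Y) r i j = 0) -> IC P X Y r.
  move=> M0.
  have cor g : 0 < Wg x X Y g -> corr P (g \o X) (g \o Y) = r.
    move=> Wp; rewrite (corrg xinj hXv hYv hid).
    have : Cg x X Y g - r * Wg x X Y g = 0.
      by rewrite hkey; apply: big1 => i _; apply: big1 => j _; rewrite M0 mulr0.
    by move/eqP; rewrite subr_eq0 => /eqP ->; rewrite mulfK // gt_eqF.
  split.
    exact: (cor idfun (Wpos_g idfun _ _ x01)).
  move=> g _ _ _ ndX _; apply: cor; move: ndX.
  by rewrite /Defs.nondegenerate (varX xinj hXv hYv) lte_fin.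
split.
  split; first by move=> H; apply/matE; exact: fwd.
  by move/matE; exact: bwd.
move=> /fwd M0.
have spm : \sum_i pm x X Y i = 1 := ht.
have pm_le1 i : pm x X Y i <= 1.
  by rewrite -spm; apply: term_le_sum => k; exact: ltW.
have pm_lt1 i : pm x X Y i < 1.
  have [l li] := other hn i.
  have := two_le_sum (fun k => ltW (pmpos k)) li; rewrite spm.
  by have := pmpos l; lra.
have p_le i j : pij x X Y i j <= pm x X Y i.
  by apply: term_le_sum => k; exact: pij_ge0.
rewrite (_ : (fun i => margvec P x X Y i 0) = pm x X Y); last first.
  by apply/funext => i; exact: pmE.
apply/andP; split; last by case/andP: hr.
rewrite /rlow ge_max; apply/andP; split; apply: seqmax_le.
- by rewrite -size_eq0 size_map size_enum_ord -lt0n (leq_trans _ hn).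
- move=> y /mapP [j _ ->].
  set q := pm x X Y j.
  have e : 2^-1 * (pij x X Y j j + pij x X Y j j) - r * q - (1 - r) * (q * q) = 0.
    by have := M0 j j; rewrite /Mq eqxx mulr1n => h; exact: h.
  have pjj := pij_ge0 x X Y j j.
  have qp : 0 < q := pmpos j.
  have q1 : q < 1 := pm_lt1 j.
  have h1 : 0 <= r * (1 - q) + q.
    have : 0 <= q * (r * (1 - q) + q) by nra.
    by rewrite pmulr_rge0.
  have up : 0 < (1 - q)^-1 by rewrite invr_gt0 subr_gt0.
  have hu : (1 - q) * (1 - q)^-1 = 1 by rewrite mulfV // gt_eqF // subr_gt0.
  have : 0 <= r * (1 - q) * (1 - q)^-1 + q * (1 - q)^-1.
    by rewrite -mulrDl mulr_ge0 // ltW.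
  rewrite -mulrA hu mulr1 => h2.
  by rewrite -subr_ge0 opprK.
- apply/eqP => e.
  have : 1 - (pm x X Y (Ordinal (ltnW hn)) * pm x X Y (Ordinal hn))^-1 \in ([::] : seq R).
    rewrite -e; apply/mapP; exists (Ordinal (ltnW hn), Ordinal hn) => //.
    rewrite mem_filter /=.
    by apply: allpairs_f; rewrite mem_enum.
  by rewrite in_nil.
- move=> y /mapP [[i j]]; rewrite mem_filter /= => /andP [ne _] ->.
  have e : 2^-1 * (pij x X Y i j + pij x X Y j i) - (1 - r) * (pm x X Y i * pm x X Y j) = 0.
    by have := M0 i j; rewrite /Mq (negbTE ne) mulr0n mulr0 subr0 => h; exact: h.
  have := p_le i j; have := p_le j i; have := pm_le1 i; have := pm_le1 j.
  have := pmpos i; have := pmpos j.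
  set qi := pm x X Y i; set qj := pm x X Y j => qjp qip qj1 qi1 hpji hpij.
  have Qp : 0 < qi * qj by rewrite mulr_gt0.
  have h : (1 - r) * (qi * qj) <= 1.
    have := pij_ge0 x X Y i j; have := pij_ge0 x X Y j i.
    have -> : (1 - r) * (qi * qj) = 2^-1 * (pij x X Y i j + pij x X Y j i).
      by apply/eqP; rewrite eq_sym -subr_eq0; apply/eqP; exact: e.
    lra.
  have vp : 0 < (qi * qj)^-1 by rewrite invr_gt0.
  have hv : (qi * qj) * (qi * qj)^-1 = 1 by rewrite mulfV // gt_eqF.
  have := ler_wpM2r (ltW vp) h; rewrite -mulrA hv mulr1 mul1r => h3.
  by rewrite lerBlDr -lerBlDl.
Qed.
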